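(* Let $G$ be a graph and $v$ a vertex of $G$ with degree $d_v$ in $G$. Let $G+c$ be the graph obtained by attaching to $G$ a new cycle $c$ of length $s_c\geq 3$ which shares only the vertex $v$ with $G$ (all its other vertices and edges are new). Then: (1) If $d_w\geq 2$ for every neighbor $w$ of $v$ in $G$, then \[R(G+c)-R(G)\geq \frac{\sqrt{d_v+2}-\sqrt{d_v}}{\sqrt 2}+\frac{s_c-2}{2},\] with equality if all these $d_w=2$. (2) If $d_v\geq 2$ and $d_w\leq d_v+2$ for every neighbor $w$ of $v$ in $G$, then \[R(G+c)-R(G)\leq \frac{s_c-1}{2},\] with equality if and only if $d_v=2$ and all these $d_w=4$. (3) If $d_v=1$ and the unique neighbor $w$ of $v$ satisfies $2\leq d_w\leq 3$, then \[R(G+c)-R(G)<\frac{s_c-1}{2}+0.075.\]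
   Context: Graphs are finite and simple; degrees $d_w$ refer to degrees in $G$. The Randi\'c index of a graph $H$ is $R(H)=\sum_{uv\in E(H)}\frac{1}{\sqrt{d_ud_v}}$, where degrees are taken in $H$. *)

(* Defs.v *)
From mathcomp Require Import all_boot all_order all_algebra.
Set Implicit Arguments. Unset Strict Implicit. Unset Printing Implicit Defensive.
Import Order.TTheory GRing.Theory Num.Theory.
Local Open Scope ring_scope.

Definition simple_graph (T : finType) (e : rel T) : Prop :=
  irreflexive e /\ symmetric e.

Definition deg (T : finType) (e : rel T) (x : T) : nat := #|[set y | e x y]|.

(* Randic index: sum over edges {x,y} of 1/sqrt(d_x d_y); each unordered edge
   is counted twice in the ordered double sum, hence the factor 1/2. *)
Definition randic (R : rcfType) (T : finType) (e : rel T) : R :=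
  2^-1 * \sum_(x : T) \sum_(y : T | e x y)
           (Num.sqrt ((deg e x)%:R * (deg e y)%:R))^-1.

(* G + c : attach to G a new cycle of length s through v.  The new vertices
   are inr 0, ..., inr (s-2) (there are s-1 of them); the cycle is
   v - inr 0 - inr 1 - ... - inr (s-2) - v. *)
Definition add_cycle (T : finType) (e : rel T) (v : T) (s : nat)
  : rel (T + 'I_s.-1)%type :=
  fun a b =>
    match a, b with
    | inl x, inl y => e x y
    | inl x, inr i => (x == v) && ((val i == 0%N) || (val i == s.-2))
    | inr i, inl x => (x == v) && ((val i == 0%N) || (val i == s.-2))
    | inr i, inr j => ((val i).+1 == val j) || ((val j).+1 == val i)
    end.
Arguments add_cycle {T} e v s _ _.
Arguments randic R {T} e.
Arguments deg {T} e x.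

(* Main.v *)
Require Import Defs.
From mathcomp Require Import all_boot all_order all_algebra.
From mathcomp Require Import zify ring lra.
Import Order.TTheory GRing.Theory Num.Theory.

Module Helpers.
Set Implicit Arguments. Unset Strict Implicit. Unset Printing Implicit Defensive.
Lemma degsum (T : finType) (e : rel T) x : deg e x = (\sum_y (e x y : nat))%N.
Proof.
rewrite /deg -sum1_card big_mkcond /=; apply: eq_bigr => y _.
by rewrite inE; case: (e x y).
Qed.

Lemma sum_eqk m k : (\sum_(j : 'I_m) ((val j == k) : nat))%N = (k < m)%N.
Proof.
case: (ltnP k m) => hk.
  rewrite (bigD1 (Ordinal hk)) //= eqxx big1 // => j hj.
  case: eqP => // hjk; move: hj; suff -> : j = Ordinal hk by rewrite eqxx.
  by apply: val_inj.
rewrite big1 // => j _; case: eqP => // hjk.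
by have := ltn_ord j; rewrite hjk ltnNge hk.
Qed.

Section Comb.
Variables (T : finType) (e : rel T) (v : T) (n : nat).
Hypothesis ge : simple_graph e.
Let E := add_cycle e v n.+3.
Definition Pc (i : 'I_n.+2) : bool := (val i == 0%N) || (val i == n.+1).

Lemma sumPc : (\sum_i (Pc i : nat))%N = 2%N.
Proof.
have -> : (\sum_i (Pc i : nat) = \sum_(i : 'I_n.+2) ((val i == 0%N) : nat) + \sum_(i : 'I_n.+2) ((val i == n.+1) : nat))%N.
  rewrite -big_split /=; apply: eq_bigr => i _; rewrite /Pc.
  by case: i => [[|k] hk] /=; rewrite ?addn0.
by rewrite (sum_eqk n.+2 0) (sum_eqk n.+2 n.+1) ltnS leqnn.
Qed.

Lemma degE_inl x : deg E (inl x) = (deg e x + (if x == v then 2 else 0))%N.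
Proof.
rewrite degsum big_sumType /= -degsum; congr addn.
case: eqP => hx /=; last by rewrite big1.
by rewrite -sumPc.
Qed.

Lemma sum_adj (i : 'I_n.+2) :
  (\sum_(j : 'I_n.+2) (((val i).+1 == val j) || ((val j).+1 == val i) : nat))%N
  = ((i.+1 < n.+2) + (0 < val i))%N.
Proof.
have -> : (\sum_(j : 'I_n.+2) (((val i).+1 == val j) || ((val j).+1 == val i) : nat)
   = \sum_(j : 'I_n.+2) ((val j == (val i).+1) : nat) + \sum_(j : 'I_n.+2) ((val j == (val i).-1) && (0 < val i) : nat))%N.
  rewrite -big_split /=; apply: eq_bigr => j _.
  case: i => [[|k] hk] /=; case: j => [j hj] /=.
    by rewrite andbF addn0 orbF eq_sym.
  by do ![case: eqP => ? /=]; lia.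
rewrite sum_eqk; congr addn.
case: i => [[|k] hk] /=; first by rewrite big1 // => j _; rewrite andbF.
under eq_bigr do rewrite andbT.
by rewrite sum_eqk /= ltnW.
Qed.

Lemma degE_inr i : ((Pc i : nat) + \sum_(j : 'I_n.+2) (((val i).+1 == val j) || ((val j).+1 == val i) : nat))%N = 2%N.
Proof.
rewrite sum_adj /Pc; case: i => [[|k] hk] /=; first by [].
case: eqP => [->|hne] /=; first by rewrite ltnn.
have : (k.+2 < n.+2)%N by lia.
by move=> ->.
Qed.

Lemma degE_inr' i : deg E (inr i) = 2%N.
Proof.
rewrite degsum big_sumType /= -(degE_inr i); congr addn.
rewrite (bigD1 v) //= eqxx /= big1 ?addn0 // => x /negbTE -> //.
Qed.

Lemma sum_adj_all : (\sum_(i : 'I_n.+2) \sum_(j : 'I_n.+2) (((val i).+1 == val j) || ((val j).+1 == val i) : nat))%N = (2 * n.+1)%N.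
Proof.
have H : (\sum_(i : 'I_n.+2) ((Pc i : nat) + \sum_(j : 'I_n.+2) (((val i).+1 == val j) || ((val j).+1 == val i) : nat)))%N = (2 * n.+2)%N.
  under eq_bigr do rewrite degE_inr.
  by rewrite sum_nat_const card_ord mulnC.
rewrite big_split /= sumPc in H; move: H; set S := (\sum_(i < n.+2) _); lia.
Qed.
End Comb.

Local Open Scope ring_scope.
Section Key.
Variable R : rcfType.

Lemma sum_if_const (I : finType) (b : pred I) (c : R) :
  \sum_i (if b i then c else 0) = (\sum_i (b i : nat))%N%:R * c.
Proof.
rewrite natr_sum big_distrl; apply: eq_bigr => i _.
by case: (b i); rewrite /= ?mul1r ?mul0r.
Qed.

Lemma sum_if_eq (I : finType) (v : I) (F : I -> R) :
  \sum_x (if x == v then F x else 0) = F v.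
Proof.
rewrite (bigD1 v) //= eqxx big1 ?addr0 // => x /negbTE -> //.
Qed.

Lemma randic_mk (T : finType) (e : rel T) : randic R e =
  2^-1 * \sum_x \sum_y (if e x y then (Num.sqrt ((deg e x)%:R * (deg e y)%:R))^-1 else 0).
Proof. by rewrite /randic; congr (_ * _); apply: eq_bigr => x _; rewrite big_mkcond. Qed.

Lemma dsum (A B : finType) (h : (A + B)%type -> (A + B)%type -> R) :
  \sum_x \sum_y h x y = \sum_a \sum_a' h (inl a) (inl a') + \sum_a \sum_b h (inl a) (inr b)
   + \sum_b \sum_a h (inr b) (inl a) + \sum_b \sum_b' h (inr b) (inr b').
Proof.
rewrite big_sumType /=.
have -> : \sum_a \sum_y h (inl a) y = \sum_a \sum_a' h (inl a) (inl a') + \sum_a \sum_b h (inl a) (inr b).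
  by rewrite -big_split; apply: eq_bigr => a _; rewrite big_sumType.
have -> : \sum_b \sum_y h (inr b) y = \sum_b \sum_a h (inr b) (inl a) + \sum_b \sum_b' h (inr b) (inr b').
  by rewrite -big_split; apply: eq_bigr => a _; rewrite big_sumType.
by rewrite !addrA.
Qed.

Variables (T : finType) (e : rel T) (v : T) (n : nat).
Hypothesis ge : simple_graph e.
Let E := add_cycle e v n.+3.
Let d := deg e v.
Let c : R := (Num.sqrt ((d%:R + 2) * 2))^-1.

Lemma partB : \sum_(x : T) \sum_(j : 'I_n.+2)
   (if E (inl x) (inr j) then (Num.sqrt ((deg E (inl x))%:R * (deg E (inr j))%:R))^-1 else 0)
   = 2 * c.
Proof.
transitivity (\sum_(x : T) (if x == v then \sum_(j : 'I_n.+2) (if Pc j then c else 0) else 0)).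
  apply: eq_bigr => x _ /=; case: eqP => [->|_] /=; last by rewrite big1.
  apply: eq_bigr => j _; rewrite -[_ || _]/(Pc j); case: (Pc j) => //.
  by rewrite degE_inl degE_inr' eqxx natrD.
by rewrite (sum_if_eq v (fun _ => \sum_(j < n.+2) (if Pc j then c else 0))) sum_if_const sumPc.
Qed.

Lemma partC : \sum_(i : 'I_n.+2) \sum_(y : T)
   (if E (inr i) (inl y) then (Num.sqrt ((deg E (inr i))%:R * (deg E (inl y))%:R))^-1 else 0)
   = 2 * c.
Proof.
transitivity (\sum_(i : 'I_n.+2) (if Pc i then c else 0)); last by rewrite sum_if_const sumPc.
apply: eq_bigr => i _ /=.
rewrite -[_ || _]/(Pc i); case: (Pc i) => /=; last by apply: big1 => y _; rewrite andbF.
under eq_bigr do rewrite andbT.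
rewrite (sum_if_eq v (fun y => (Num.sqrt ((deg E (inr i))%:R * (deg E (inl y))%:R))^-1)).
by rewrite degE_inl degE_inr' eqxx natrD mulrC.
Qed.

Lemma partD : \sum_(i : 'I_n.+2) \sum_(j : 'I_n.+2)
   (if E (inr i) (inr j) then (Num.sqrt ((deg E (inr i))%:R * (deg E (inr j))%:R))^-1 else 0)
   = (n.+1%:R : R).
Proof.
have h2 : (Num.sqrt ((2%N%:R : R) * 2%N%:R))^-1 = (2 : R)^-1.
  by rewrite -expr2 sqrtr_sqr ger0_norm.
transitivity (\sum_(i : 'I_n.+2) \sum_(j : 'I_n.+2)
   (if ((val i).+1 == val j) || ((val j).+1 == val i) then (2^-1 : R) else 0)).
  by apply: eq_bigr => i _; apply: eq_bigr => j _; rewrite !degE_inr' h2.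
under eq_bigr do rewrite sum_if_const.
rewrite -big_distrl /= -natr_sum sum_adj_all natrM.
lra.
Qed.


Lemma dbl (I : finType) (w : I) (h : I -> I -> R) :
  (forall x y, x != w -> y != w -> h x y = 0) -> h w w = 0 ->
  (forall x y, h x y = h y x) ->
  \sum_x \sum_y h x y = 2 * \sum_y h w y.
Proof.
move=> h0 hww hs.
rewrite (bigD1 w) //=.
have -> : \sum_(x | x != w) \sum_y h x y = \sum_(x | x != w) h x w.
  apply: eq_bigr => x hx; rewrite (bigD1 w) //= big1 ?addr0 // => y hy.
  exact: h0.
have -> : \sum_(x | x != w) h x w = \sum_x h w x.
  rewrite [RHS](bigD1 w) //= hww add0r; apply: eq_bigr => x _; exact: hs.
by rewrite mulr2n mulrDl mul1r.
Qed.

Lemma partA :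
  \sum_(x : T) \sum_(y : T) (if e x y then (Num.sqrt ((deg E (inl x))%:R * (deg E (inl y))%:R))^-1 else 0)
  - \sum_(x : T) \sum_(y : T) (if e x y then (Num.sqrt ((deg e x)%:R * (deg e y)%:R : R))^-1 else 0)
  = 2 * \sum_(w | e v w) ((Num.sqrt ((d%:R + 2) * (deg e w)%:R))^-1 - (Num.sqrt (d%:R * (deg e w)%:R))^-1).
Proof.
case: ge => irr sym.
rewrite -sumrB.
under eq_bigr do rewrite -sumrB.
rewrite (@dbl _ v); last 3 first.
- move=> x y hx hy; case: (e x y); last by rewrite subrr.
  by rewrite !degE_inl (negbTE hx) (negbTE hy) !addn0 subrr.
- by rewrite (irr v : e v v = false) subrr.
- move=> x y; rewrite (sym x y); case: (e y x); last by rewrite subrr.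
  by rewrite (mulrC (deg E (inl x))%:R) (mulrC (deg e x)%:R).
congr (_ * _); rewrite [RHS]big_mkcond; apply: eq_bigr => y _.
case: ifP => hy; last by rewrite subrr.
have hyv : y != v by apply/eqP => hyv; rewrite hyv (irr v : e v v = false) in hy.
by rewrite !degE_inl eqxx (negbTE hyv) addn0 natrD.
Qed.


Lemma key : randic R E - randic R e =
  \sum_(w | e v w) ((Num.sqrt ((d%:R + 2) * (deg e w)%:R))^-1 - (Num.sqrt (d%:R * (deg e w)%:R))^-1)
  + 2 * c + n.+1%:R / 2.
Proof.
rewrite !randic_mk dsum.
have hA := partA. have hB := partB. have hC := partC. have hD := partD.
rewrite hB hC hD.
rewrite /E /= in hA *.
lra.
Qed.
End Key.

Section An.
Variable R : rcfType.
Variables (T : finType) (e : rel T) (v : T).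
Hypothesis ge : simple_graph e.
Let d := deg e v.
Let a : R := Num.sqrt (d%:R + 2).
Let b : R := Num.sqrt d%:R.
Let r : R := Num.sqrt 2.
Let Sum : R := \sum_(w | e v w) ((Num.sqrt ((d%:R + 2) * (deg e w)%:R))^-1 - (Num.sqrt (d%:R * (deg e w)%:R))^-1).

Lemma deg_pos w : e v w -> (0 < deg e w)%N.
Proof. by case: ge => _ sym hw; apply/card_gt0P; exists v; rewrite inE sym. Qed.

Lemma d_pos w : e v w -> (0 < d)%N.
Proof. by move=> hw; apply/card_gt0P; exists w; rewrite inE. Qed.

Lemma sum_const_nb (k : R) : \sum_(w | e v w) k = d%:R * k.
Proof.
rewrite sumr_const /d /deg.
have -> : #|[set y | e v y]| = #|e v| by apply: eq_card => y; rewrite inE.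
by rewrite mulr_natl.
Qed.

Lemma Sum_eq : Sum = \sum_(w | e v w) ((a^-1 - b^-1) * (Num.sqrt (deg e w)%:R)^-1).
Proof.
apply: eq_bigr => w _.
by rewrite !sqrtrM ?addr_ge0 ?ler0n // !invfM mulrBl.
Qed.

Lemma lb : (forall w, e v w -> (2 <= deg e w)%N) ->
  d%:R * ((a^-1 - b^-1) * r^-1) <= Sum /\
  ((forall w, e v w -> deg e w = 2%N) -> Sum = d%:R * ((a^-1 - b^-1) * r^-1)).
Proof.
move=> h2; rewrite Sum_eq -sum_const_nb; split.
  apply: ler_sum => w hw.
  have dp := d_pos hw.
  have hb : 0 < b by rewrite sqrtr_gt0 ltr0n.
  have hab : b < a.
    have hd0 : (0:R) <= d%:R by rewrite ler0n.
    by rewrite /a /b ltr_sqrt; lra.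
  have hcoef : a^-1 - b^-1 <= 0.
    rewrite subr_le0 lef_pV2 ?posrE //; [exact: ltW | exact: lt_trans hab].
  apply: ler_wnM2l => //.
  rewrite lef_pV2 ?posrE ?sqrtr_gt0 ?ltr0n ?(leq_trans _ (h2 w hw)) //.
  by rewrite ler_sqrt ?ler0n // ler_nat h2.
move=> he; apply: eq_bigr => w hw; by rewrite he.
Qed.


Lemma ub : (1 <= d)%N -> (forall w, e v w -> (deg e w <= d + 2)%N) ->
  Sum <= d%:R * ((a^-1 - b^-1) * a^-1) /\
  (Sum = d%:R * ((a^-1 - b^-1) * a^-1) -> forall w, e v w -> deg e w = (d + 2)%N).
Proof.
move=> dp h2.
have hd0 : (0:R) <= d%:R by rewrite ler0n.
have hb : 0 < b by rewrite sqrtr_gt0 ltr0n.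
have hab : b < a by rewrite /a /b ltr_sqrt; lra.
have ha : 0 < a by exact: lt_trans hab.
have hcoef : a^-1 - b^-1 < 0.
  by rewrite subr_lt0 ltf_pV2 ?posrE.
have hq w : e v w -> (0:R) < Num.sqrt (deg e w)%:R by move=> hw; rewrite sqrtr_gt0 ltr0n deg_pos.
have hle w : e v w -> (a^-1 - b^-1) * (Num.sqrt (deg e w)%:R)^-1 <= (a^-1 - b^-1) * a^-1.
  move=> hw; apply: ler_wnM2l; first exact: ltW.
  rewrite lef_pV2 ?posrE ?hq //.
  rewrite /a ler_sqrt; last lra.
  by rewrite -(natrD R d 2) ler_nat h2.
rewrite Sum_eq -sum_const_nb; split; first exact: ler_sum.
move=> heq w hw.
have H0 : \sum_(w | e v w) ((a^-1 - b^-1) * a^-1 - (a^-1 - b^-1) * (Num.sqrt (deg e w)%:R)^-1) = 0.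
  by rewrite sumrB heq subrr.
have hnn : forall i, e v i -> (0:R) <= (a^-1 - b^-1) / a - (a^-1 - b^-1) / Num.sqrt (deg e i)%:R.
  by move=> i hi; rewrite subr_ge0; exact: hle.
have := psumr_eq0P hnn H0 hw.
rewrite -mulrBr => /eqP; rewrite mulf_eq0 (negbTE (ltr0_neq0 hcoef)) /= subr_eq0.
move=> /eqP /invr_inj /(congr1 (fun x => x ^+ 2)).
rewrite /a !sqr_sqrtr ?ler0n //; last lra.
by rewrite -(natrD R d 2) => /eqP; rewrite eqr_nat => /eqP.
Qed.

Lemma ub_eq : (forall w, e v w -> deg e w = (d + 2)%N) ->
  Sum = d%:R * ((a^-1 - b^-1) * a^-1).
Proof.
move=> h4; rewrite Sum_eq -sum_const_nb; apply: eq_bigr => w hw.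
by rewrite (h4 w hw) natrD.
Qed.

End An.

Lemma num3 (R : rcfType) (a r : R) : 0 < a -> 0 < r -> a * a = 3 -> r * r = 2 ->
  (1 - a + a * r) / (1 + 2) < 2^-1 + 75 / 1000.
Proof.
move=> ha hr ha3 hr2.
have hau : a < 26 / 15.
  rewrite ltNge; apply/negP => h.
  have : 26 / 15 * (26 / 15) <= a * a by apply: ler_pM => //; lra.
  lra.
have hrl : 1 < r.
  rewrite ltNge; apply/negP => h.
  have : r * r <= 1 * 1 by apply: ler_pM => //; lra.
  lra.
have hru : r < 17 / 12.
  rewrite ltNge; apply/negP => h.
  have : 17 / 12 * (17 / 12) <= r * r by apply: ler_pM => //; lra.
  lra.
have h1 : 0 < (26 / 15 - a) * (r - 1) by apply: mulr_gt0; lra.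
have h2 : a * r - a < 29 / 40 by nra.
rewrite ltr_pdivrMr; lra.
Qed.

Lemma auxX (R : rcfType) (a b r dv : R) : a != 0 -> b != 0 -> r != 0 ->
  b ^+ 2 = dv -> 2 / r = r ->
  dv * ((a^-1 - b^-1) / a) + 2 * (a^-1 / r) = (b^+2 - a * b + a * r) / a^+2.
Proof.
move=> ha hb hr <- h2r.
rewrite -[in RHS]h2r; field.
by rewrite ha hb hr.
Qed.

End Helpers.
Import Helpers.
Local Open Scope ring_scope.

Theorem lemma2p7 (R : rcfType) (T : finType) (e : rel T) (v : T) (s : nat) :
  simple_graph e -> (3 <= s)%N ->
  let D : R := randic R (add_cycle e v s) - randic R e in
  let dv : R := (deg e v)%:R in
  (* (1) *)
  ((forall w, e v w -> (2 <= deg e w)%N) ->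
     D >= (Num.sqrt (dv + 2) - Num.sqrt dv) / Num.sqrt 2 + (s%:R - 2) / 2 /\
     ((forall w, e v w -> deg e w = 2%N) ->
        D = (Num.sqrt (dv + 2) - Num.sqrt dv) / Num.sqrt 2 + (s%:R - 2) / 2))
  /\
  (* (2) *)
  ((2 <= deg e v)%N -> (forall w, e v w -> (deg e w <= deg e v + 2)%N) ->
     D <= (s%:R - 1) / 2 /\
     (D = (s%:R - 1) / 2 <-> deg e v = 2%N /\ forall w, e v w -> deg e w = 4%N))
  /\
  (* (3) *)
  (deg e v = 1%N -> (forall w, e v w -> (2 <= deg e w <= 3)%N) ->
     D < (s%:R - 1) / 2 + 75 / 1000).
Proof.
move=> ge; case: s => [|[|[|n]]] // _ D dv.
have hs : (n.+3%:R : R) = n.+1%:R + 2 by rewrite -natrD addn2.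
rewrite hs.
have hK := key R v n ge.
rewrite -/D in hK.
have hlb := lb R (e:=e) (v:=v).
have hub := ub R ge (v:=v).
have hueq := ub_eq R (e:=e) (v:=v).
move: hlb hub hueq hK.
rewrite -/dv.
set Sum := \sum_(w | e v w) _.
set a := Num.sqrt (dv + 2).
set b := Num.sqrt dv.
set r := Num.sqrt (2 : R).
move=> hlb hub hueq hK.
have hd0 : 0 <= dv by rewrite ler0n.
have hr : 0 < r by rewrite sqrtr_gt0.
have hr2 : r ^+ 2 = 2 by rewrite sqr_sqrtr.
have ha : 0 < a by rewrite sqrtr_gt0; lra.
have ha2 : a ^+ 2 = dv + 2 by rewrite sqr_sqrtr //; lra.
have hb : 0 <= b by rewrite sqrtr_ge0.
have hb2 : b ^+ 2 = dv by rewrite sqr_sqrtr.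
have hc : (Num.sqrt ((dv + 2) * 2))^-1 = a^-1 * r^-1.
  by rewrite sqrtrM ?invfM //; lra.
rewrite hc in hK.
have hdb : dv * b^-1 = b.
  have [->|bn0] := eqVneq b 0; first by rewrite invr0 mulr0.
  by rewrite -hb2 expr2 mulfK.
have hda : (dv + 2) * a^-1 = a by rewrite -ha2 expr2 mulfK // gt_eqF.
have id1 : dv * ((a^-1 - b^-1) / r) + 2 * (a^-1 / r) = (a - b) / r.
  transitivity (((dv + 2) * a^-1 - dv * b^-1) / r); first by ring.
  by rewrite hdb hda.
have h2r : 2 / r = r by rewrite -hr2 expr2 mulfK // gt_eqF.
have hX : 0 < b -> dv * ((a^-1 - b^-1) / a) + 2 * (a^-1 / r) = (b^+2 - a * b + a * r) / a^+2.
  by move=> bp; apply: auxX => //; rewrite gt_eqF.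
split.
  move=> h2; have [l1 l2] := hlb h2; split.
    rewrite hK; lra.
  move=> h; rewrite hK (l2 h); lra.
have hbr_eq : forall k : R, 0 < k -> b ^+ 2 = k ^+ 2 -> b = k.
  move=> k hk hbk.
  have : (b - k) * (b + k) = 0 by rewrite -subr_sqr hbk subrr.
  move/eqP; rewrite mulf_eq0 => /orP [/eqP|/eqP] h; first by apply/eqP; rewrite -subr_eq0 h.
  lra.
split.
  move=> hd2 hw.
  have d1 : (0 < deg e v)%N by apply: ltnW.
  have := hub d1 hw; rewrite -/dv -/a -/b -/Sum; case=> u1 u2.
  have h2dv : 2 <= dv by rewrite /dv (ler_nat R 2).
  have hrb : r <= b by rewrite /r /b ler_sqrt //; lra.
  have hra : r < a by rewrite /r /a ltr_sqrt; lra.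
  have hba : b < a by rewrite /a /b ltr_sqrt; lra.
  have hX' := hX (lt_le_trans hr hrb).
  set M := dv * _ in u1 u2 hX' hueq.
  have ha2p : 0 < a ^+ 2 by rewrite exprn_gt0.
  have hprod : 0 <= (b - r) * (2 * a - b - r) by apply: mulr_ge0; lra.
  have hXle : M + 2 * (a^-1 / r) <= 2^-1.
    rewrite hX' ler_pdivrMr //; nra.
  split; first by rewrite hK; lra.
  split.
    move=> hE.
    have hSM : Sum = M by lra.
    have hXe : M + 2 * (a^-1 / r) = 2^-1 by lra.
    rewrite hX' in hXe.
    have hq : (b - r) * (2 * a - b - r) = 0.
      have : b ^+ 2 - a * b + a * r = (b ^+ 2 - a * b + a * r) / a ^+ 2 * a ^+ 2.
        by rewrite mulfVK // gt_eqF.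
      rewrite hXe => hXe2; nra.
    have hbr : b = r.
      move/eqP: hq; rewrite mulf_eq0 => /orP [/eqP|/eqP] h; last lra.
      by apply/eqP; rewrite -subr_eq0 h.
    have hdv2 : dv = 2 by rewrite -hb2 hbr hr2.
    have hd : deg e v = 2%N by apply/eqP; rewrite -(eqr_nat R) -/dv hdv2.
    split => // w hw'; by rewrite (u2 hSM w hw') hd.
  case=> hd hw4.
  have hdv2 : dv = 2 by rewrite /dv hd.
  have hbr : b = r by apply: hbr_eq => //; rewrite hb2 hr2.
  have hSM : Sum = M by apply: hueq => w hw'; rewrite hd hw4.
  rewrite hK hSM.
  have : M + 2 * (a^-1 / r) = 2^-1.
    rewrite hX' hbr hr2 ha2 hdv2; by field.
  move=> hh; lra.
move=> hd1 hw.
have d1 : (0 < deg e v)%N by rewrite hd1.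
have hw' : forall w, e v w -> (deg e w <= deg e v + 2)%N.
  by move=> w hvw; rewrite hd1; case/andP: (hw w hvw).
have := hub d1 hw'; rewrite -/dv -/a -/b -/Sum; case=> u1 _.
have hdv1 : dv = 1 by rewrite /dv hd1.
have hb1 : b = 1 by apply: hbr_eq => //; rewrite hb2 hdv1 expr1n.
have hX' := hX (ltac:(rewrite hb1; exact: ltr01)).
rewrite hb1 in hX' u1.
set M := dv * _ in u1 hX'.
rewrite ha2 hdv1 in hX'.
have ha3 : a * a = 3 by rewrite -expr2 ha2 hdv1.
have hr2' : r * r = 2 by rewrite -expr2 hr2.
rewrite expr1n mulr1 in hX'.
have hn := num3 ha hr ha3 hr2'.
rewrite hK; lra.
Qed.
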